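(* Let $\pi=a_1a_2\cdots a_n\in\mathfrak{S}_n$, let $i_1<i_2<\cdots<i_d$ be the descents of $\pi$ (the indices $i\in[n-1]$ with $a_i>a_{i+1}$) and let $x_k=a_{i_k}$. Put $\pi_0=\pi$ and $\pi_k=r^{x_k}(\pi_{k-1})$ for $k=1,\dots,d$. Then $S(\pi)=\pi_d$, where $S$ is the stack-sorting operator.
   Context: The stack-sorting operator $S$ is defined recursively on words with distinct letters from $\{1,2,\dots\}$: $S$ of the empty word is empty; if $w$ is nonempty write $w=LmR$ with $m$ the greatest letter of $w$, and set $S(w)=S(L)S(R)m$. For a permutation $\sigma=c_1\cdots c_n\in\mathfrak{S}_n$ and a letter $x=c_k$, put $c_{n+1}=n+1$ and define $r^x(\sigma)$ as the permutation obtained by removing $x$ and inserting it between the first pair of consecutive letters $c_j,c_{j+1}$ with $j>k$ (i.e. to the right of $x$) such that $c_j<x<c_{j+1}$ (if no such pair exists, $r^x(\sigma)=\sigma$). *)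

(* Defs.v *)
From mathcomp Require Import all_boot.
Set Implicit Arguments. Unset Strict Implicit. Unset Printing Implicit Defensive.

(* greatest letter of a word (letters are >= 1, so 0 is a safe default) *)
Definition maxletter (w : seq nat) : nat := foldr maxn 0 w.

(* S(w) = S(L) S(R) m with w = L m R, m the greatest letter; the fuel
   argument only ensures termination: size w fuel suffices since L, R are
   strictly shorter than w. *)
Fixpoint stack_sort_fuel (fuel : nat) (w : seq nat) : seq nat :=
  match fuel with
  | 0 => [::]
  | f.+1 =>
    match w with
    | [::] => [::]
    | _ :: _ =>
      let m := maxletter w in
      let i := index m w in
      stack_sort_fuel f (take i w) ++ stack_sort_fuel f (drop i.+1 w) ++ [:: m]
    end
  end.

Definition stack_sort (w : seq nat) : seq nat := stack_sort_fuel (size w) w.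

(* r^x(sigma): sigma = c_1 ... c_n, x = c_k, c_{n+1} = n+1.  In 0-based
   indexing x sits at position k0 = index x sigma; candidate j0 ranges over
   k0+1 .. n-1 (i.e. 1-based j > k, j <= n), with c = sigma ++ [:: n+1]. *)
Definition r_move (x : nat) (sigma : seq nat) : seq nat :=
  let n := size sigma in
  let c := sigma ++ [:: n.+1] in
  let k0 := index x sigma in
  let js := [seq j <- iota k0.+1 (n - k0.+1)
               | (nth 0 c j < x) && (x < nth 0 c j.+1)] in
  match js with
  | [::] => sigma
  | j :: _ => take k0 sigma ++ take (j - k0) (drop k0.+1 sigma)
                ++ x :: drop j.+1 sigma
  end.

Definition descent_tops (pi : seq nat) : seq nat :=
  [seq nth 0 pi i | i <- iota 0 (size pi).-1 & nth 0 pi i.+1 < nth 0 pi i].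

Definition iterated_moves (pi : seq nat) : seq nat :=
  foldl (fun p x => r_move x p) pi (descent_tops pi).

(* Main.v *)
Require Import Defs.
From mathcomp Require Import all_boot.
From mathcomp Require Import zify.

Lemma maxletter_mem (w : seq nat) : w != [::] -> maxletter w \in w.
Proof.
elim: w => // a t IH _. case: t IH => [|b t] IH.
  by rewrite /maxletter /= maxn0 mem_head.
have H := IH isT. rewrite /maxletter in H *.
change (maxn a (foldr maxn 0 (b :: t)) \in a :: b :: t).
move: H; set M := foldr maxn 0 (b :: t) => H.
case: (leqP a M) => Hl.
  by rewrite in_cons H orbT.
by rewrite mem_head.
Qed.

Lemma maxletter_ub (w : seq nat) x : x \in w -> x <= maxletter w.
Proof.
elim: w => // a t IH. rewrite in_cons /maxletter /= => /orP [/eqP ->|H].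
  exact: leq_maxl.
apply: leq_trans (IH H) _. exact: leq_maxr.
Qed.

Lemma ssf_cons f w : w != [::] -> stack_sort_fuel f.+1 w =
  stack_sort_fuel f (take (index (maxletter w) w) w) ++
  stack_sort_fuel f (drop (index (maxletter w) w).+1 w) ++ [:: maxletter w].
Proof. by case: w. Qed.

Lemma fuel_eq f1 f2 w : size w <= f1 -> size w <= f2 ->
  stack_sort_fuel f1 w = stack_sort_fuel f2 w.
Proof.
elim: f1 f2 w => [|f1 IH] [|f2] w; case: w => [|a t] // H1 H2.
have Hi : index (maxletter (a::t)) (a::t) < size (a::t)
  by rewrite index_mem maxletter_mem.
rewrite !ssf_cons //.
move: Hi H1 H2. set w := a :: t. set i := index _ w => Hi H1 H2.
congr (_ ++ _ ++ _); apply: IH; rewrite ?size_take ?size_drop;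
  try case: ifP; rewrite /w /= in H1 H2 Hi *; lia.
Qed.

Lemma fuelE f w : size w <= f -> stack_sort_fuel f w = stack_sort w.
Proof. by move=> H; apply: fuel_eq. Qed.


Fixpoint tops (s : seq nat) : seq nat :=
  match s with
  | x :: t => if t is y :: _ then (if y < x then x :: tops t else tops t)
              else [::]
  | [::] => [::]
  end.

Lemma descent_topsE s : descent_tops s = tops s.
Proof.
elim: s => [|x t IH] //. case: t IH => [|y t] IH //.
transitivity (if y < x then x :: descent_tops (y::t) else descent_tops (y::t)); last by rewrite IH.
rewrite /descent_tops /=.
have -> : iota 1 (size t) = map succn (iota 0 (size t)).
  by rewrite -(addn0 1) iotaDl; apply: eq_map => i; rewrite add1n.
rewrite filter_map.
case: ifP => _ /=; rewrite -map_comp; rewrite ?(eq_filter (a2 := fun i => nth 0 t i < nth 0 (y :: t) i)) //; by apply: eq_map.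
Qed.

Definition mv (x : nat) (s : seq nat) : seq nat :=
  if x \in s then
    let k := index x s in
    let B := drop k.+1 s in
    let q := find (fun y => x < y) B in
    take k s ++ take q B ++ x :: drop q B
  else s.

Lemma mv_perm x s : perm_eq (mv x s) s.
Proof.
rewrite /mv; case: ifP => // xs.
set k := index x s; set B := drop k.+1 s; set q := find _ B.
have Hd : drop k s = x :: B by rewrite /B /k (drop_nth 0) ?index_mem // nth_index.
rewrite -[X in perm_eq _ X](cat_take_drop k s) Hd perm_cat2l -[X in perm_eq _ (_ :: X)](cat_take_drop q B).
by rewrite -cat1s perm_catCA.
Qed.

Lemma mv_catr x (L : seq nat) m (R : seq nat) : x \in L -> x < m ->
  mv x (L ++ m :: R) = mv x L ++ m :: R.
Proof.
move=> xL xm; rewrite /mv mem_cat xL /= index_cat xL.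
have Hk : index x L < size L by rewrite index_mem.
rewrite take_cat Hk drop_cat.
case: ifP => Hk1.
  rewrite find_cat; case: ifP => Hh.
    rewrite take_cat drop_cat -has_find Hh -!catA //.
  rewrite /= xm addn0 take_size_cat // drop_size_cat //.
  by rewrite (hasNfind (negbT Hh)) take_size drop_size -!catA.
have -> : (index x L).+1 = size L by apply/eqP; rewrite eqn_leq Hk leqNgt Hk1.
by rewrite subnn /= xm drop_size /= -catA.
Qed.

Lemma mv_catl x (P s : seq nat) : x \notin P -> mv x (P ++ s) = P ++ mv x s.
Proof.
move=> xP; rewrite /mv mem_cat (negbTE xP) /=.
case: ifP => // xs.
rewrite index_cat (negbTE xP) take_cat ltnNge leq_addr /= addKn.
by rewrite -addnS drop_cat ltnNge leq_addr /= addKn -catA.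
Qed.

Lemma tops_sub s x : x \in tops s -> x \in s.
Proof.
elim: s => [|a t IH] //=. case: t IH => [|b t] IH //.
case: ifP => _; rewrite ?in_cons => H.
  case/orP: H => [->//|/IH]. by rewrite in_cons => ->; rewrite orbT.
by move/IH: H; rewrite in_cons => ->; rewrite orbT.
Qed.

Lemma tops_split (L R : seq nat) m : all (fun y => y < m) L ->
  all (fun y => y < m) R ->
  tops (L ++ m :: R) = tops L ++ (if R is [::] then [::] else m :: tops R).
Proof.
move=> HL HR; elim: L HL => [|a L IH] /=.
  by case: R HR => [|b R] //= /andP [-> _].
case/andP=> am HL; rewrite (IH HL).
case: L {IH} HL => [|b L] _ /=; last by case: ifP.
by rewrite ltnNge (ltnW am).
Qed.

Definition good (x : nat) (p : seq nat) :=
  ((index x p).+1 < size p) && (nth 0 p (index x p).+1 < x).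

Lemma good_catl x A B : good x A -> good x (A ++ B).
Proof.
case/andP=> H1 H2. have xA : x \in A by rewrite -index_mem (ltnW H1).
rewrite /good index_cat xA size_cat nth_cat H1 H2 andbT. exact: leq_trans H1 (leq_addr _ _).
Qed.

Lemma good_catr x A B : x \notin A -> good x B -> good x (A ++ B).
Proof.
move=> xA /andP [H1 H2].
rewrite /good index_cat (negbTE xA) size_cat nth_cat.
have -> : ((size A + index x B).+1 < size A) = false by apply/negbTE; rewrite -leqNgt; lia.
rewrite -addnS addKn H2.
by rewrite andbT ltn_add2l.
Qed.

Definition F (w : seq nat) (xs : seq nat) := foldl (fun p x => mv x p) w xs.

Lemma F_perm w xs : perm_eq (F w xs) w.
Proof.
elim: xs w => [|x xs IH] w //=. 
by apply: perm_trans (IH _) (mv_perm _ _).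
Qed.

Lemma F_catr (L R : seq nat) m xs : {in xs, forall x, x \in L /\ x < m} ->
  F (L ++ m :: R) xs = F L xs ++ m :: R.
Proof.
elim: xs L => [|x xs IH] L H //=.
have [xL xm] := H x (mem_head _ _).
rewrite mv_catr // IH // => y yxs.
have /H [yL ym] : y \in x :: xs by rewrite in_cons yxs orbT.
by rewrite (perm_mem (mv_perm _ _)).
Qed.

Lemma F_catl (P s : seq nat) xs : {in xs, forall x, x \notin P} ->
  F (P ++ s) xs = P ++ F s xs.
Proof.
elim: xs s => [|x xs IH] s H //=.
rewrite mv_catl ?H ?mem_head // IH // => y yxs.
by apply: H; rewrite in_cons yxs orbT.
Qed.

Lemma decomp (w : seq nat) : w != [::] -> exists L m R,
  [/\ w = L ++ m :: R,
      stack_sort w = stack_sort L ++ stack_sort R ++ [:: m],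
      {in L, forall y, y <= m} & {in R, forall y, y <= m}].
Proof.
move=> wn. set m := maxletter w. set i := index m w.
have mw : m \in w by apply: maxletter_mem.
have Hi : i < size w by rewrite index_mem.
have Hw : w = take i w ++ m :: drop i.+1 w.
  by rewrite -{1}(cat_take_drop i w) (drop_nth 0) // nth_index.
exists (take i w), m, (drop i.+1 w); split => //.
- case: w wn @m @i mw Hi Hw => // a t _ m i mw Hi Hw.
  have Hs : size (a :: t) = (size t).+1 by [].
  rewrite Hs in Hi; rewrite /stack_sort Hs ssf_cons // -/m -/i.
  rewrite !fuelE // ?size_take ?size_drop ?Hs ?Hi; lia.
- by move=> y /mem_take /maxletter_ub.
- by move=> y /mem_drop /maxletter_ub.
Qed.

Lemma F_cat w xs ys : F w (xs ++ ys) = F (F w xs) ys.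
Proof. exact: foldl_cat. Qed.

Lemma F_cons w x xs : F w (x :: xs) = F (mv x w) xs.
Proof. by []. Qed.

Lemma mv_head m (R : seq nat) : all (fun y => y < m) R -> mv m (m :: R) = R ++ [:: m].
Proof.
move=> HR; rewrite /mv mem_head /= eqxx /= drop0 hasNfind ?take_size ?drop_size //.
apply/hasPn => y yR /=. by rewrite -leqNgt ltnW // (allP HR).
Qed.

Lemma mainQ (w : seq nat) : uniq w -> stack_sort w = F w (tops w) /\
  (forall k, k < size (tops w) ->
     good (nth 0 (tops w) k) (F w (take k (tops w)))).
Proof.
have [n] := ubnP (size w); elim: n w => // n IH w Hsz Hu.
case: (eqVneq w [::]) => [-> | wn]; first by split.
have [L [m [R [Hw HS HL HR]]]] := decomp w wn.
rewrite HS; subst w.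
move: Hu; rewrite cat_uniq /= => /and3P [uL /norP [mL hRL] /andP [mR uR]].
have RL : {in R, forall y, y \notin L}.
  by move=> y yR; apply: contra hRL => yL; apply/hasP; exists y.
have aL : all (fun y => y < m) L.
  apply/allP => y yL /=; rewrite ltn_neqAle HL // andbT.
  by apply: contraNneq mL => <-.
have aR : all (fun y => y < m) R.
  apply/allP => y yR /=; rewrite ltn_neqAle HR // andbT.
  by apply: contraNneq mR => <-.
rewrite size_cat /= in Hsz.
have [SL gL] := IH L ltac:(lia) uL.
have [SR gR] := IH R ltac:(lia) uR.
have SLp : perm_eq (stack_sort L) L by rewrite SL F_perm.
have mSL : m \notin stack_sort L by rewrite (perm_mem SLp).
have RSL : {in R, forall y, y \notin stack_sort L}.
  by move=> y yR; rewrite (perm_mem SLp) RL.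
have tLm : {in tops L, forall x, x \in L /\ x < m}.
  by move=> x /tops_sub xL; split => //; apply: (allP aL).
rewrite tops_split //.
split.
  rewrite F_cat F_catr // -SL.
  case E: R => [|b R']; first by [].
  rewrite -E F_cons mv_catl // mv_head // F_catl; last by move=> y /tops_sub /RSL.
  rewrite F_catr -?SR // => y /tops_sub yR; split => //; exact: (allP aR).
move=> k; rewrite size_cat nth_cat take_cat; case: ifP => Hk Hk2.
  rewrite F_catr; first by apply/good_catl/gL.
  by move=> y /mem_take /tLm.
case E: R Hk2 => [|b R'] Hk2; first by rewrite /= addn0 Hk in Hk2.
rewrite -E in Hk2 *.
rewrite F_cat F_catr // -SL.
case Ek: (k - size (tops L)) => [|k'] /=.
  apply: good_catr => //.
  by rewrite E /good /= eqxx /=; apply: (allP aR); rewrite E mem_head.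
have Hk' : k' < size (tops R) by rewrite /= in Hk2; lia.
rewrite mv_catl // mv_head // F_catl; last by move=> y /mem_take /tops_sub /RSL.
rewrite F_catr; last by move=> y /mem_take /tops_sub yR; split => //; exact: (allP aR).
apply: good_catr; first by apply: RSL; apply: tops_sub; apply: mem_nth.
by apply/good_catl/gR.
Qed.

Lemma r_move_mv x (p : seq nat) : uniq p -> good x p -> x < (size p).+1 ->
  r_move x p = mv x p.
Proof.
move=> up /andP [H1 H2] xn.
have xp : x \in p by rewrite -index_mem (ltnW H1).
rewrite /r_move /mv xp.
set k := index x p in H1 H2 *.
set B := drop k.+1 p; set q := find (fun y => x < y) B.
have sB : size B = size p - k.+1 by rewrite size_drop.
have nB i : nth 0 B i = nth 0 p (k.+1 + i) by rewrite nth_drop.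
have qB : q <= size B by apply: find_size.
have q0 : 0 < q.
  rewrite lt0n; apply/negP => /eqP q0.
  have : q < size B by rewrite q0 sB; lia.
  rewrite -has_find => hB. have := nth_find 0 hB; rewrite -/q q0 nB addn0.
  by rewrite ltnNge ltnW.
have ltB i : i < q -> nth 0 B i < x.
  move=> iq; have := before_find 0 iq; rewrite -/q ltnNge => /negbFE.
  rewrite leq_eqVlt => /orP [|//] /eqP E; exfalso.
  have : nth 0 p (k.+1 + i) == nth 0 p k.
    by rewrite -nB E /k nth_index.
  by rewrite nth_uniq //; [move/eqP; lia | change (k.+1 + i < @size nat p); lia | change (k < @size nat p); lia].
have -> : iota k.+1 (size p - k.+1) = iota k.+1 q.-1 ++ (k + q) :: iota (k + q).+1 (size p - k.+1 - q).
  have e1 : k + q = k.+1 + q.-1 by lia.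
  rewrite e1 -/(iota (k.+1 + q.-1) (size p - k.+1 - q).+1) -iotaD; congr iota; lia.
rewrite filter_cat.
have -> : [seq j <- iota k.+1 q.-1 | (nth 0 (p ++ [:: (size p).+1]) j < x) && (x < nth 0 (p ++ [:: (size p).+1]) j.+1)] = [::].
  apply/eqP; rewrite -[_ == _]negbK -has_filter; apply/hasPn => j.
  rewrite mem_iota => /andP [j1 j2].
  rewrite negb_and; apply/orP; right.
  rewrite nth_cat (_ : j.+1 < size p); last by lia.
  have -> : j.+1 = k.+1 + (j - k) by lia.
  have h := ltB (j - k) ltac:(lia); rewrite nB in h.
  rewrite -leqNgt; exact: ltnW h.
rewrite /= nth_cat (_ : k + q < size p); last by lia.
have -> : k + q = k.+1 + q.-1 by lia.
rewrite -nB ltB; last by lia.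
rewrite /= nth_cat.
have -> : x < (if (k.+1 + q.-1).+1 < size p then nth 0 p (k.+1 + q.-1).+1
               else nth 0 [:: (size p).+1] ((k.+1 + q.-1).+1 - size p)).
  case: ifP => Hq.
    rewrite -addnS -nB prednK //.
    have hB : has (fun y => x < y) B by rewrite has_find; lia.
    exact: (nth_find 0 hB).
  have -> : (k.+1 + q.-1).+1 - size p = 0 by move/negbT: Hq; lia.
  by [].
rewrite /= (_ : k.+1 + q.-1 - k = q); last by lia.
by rewrite (_ : (k.+1 + q.-1).+1 = q + k.+1) -?drop_drop //; lia.
Qed.

Lemma fold_eq (w : seq nat) xs :
  (forall k, k < size xs -> r_move (nth 0 xs k) (F w (take k xs)) =
                            mv (nth 0 xs k) (F w (take k xs))) ->
  foldl (fun p x => r_move x p) w xs = F w xs.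
Proof.
elim: xs w => [|x xs IH] w //= H.
have -> : r_move x w = mv x w by apply: (H 0).
apply: IH => k Hk. exact: (H k.+1).
Qed.

Theorem theorem4p1 (n : nat) (pi : seq nat) :
  perm_eq pi (iota 1 n) -> stack_sort pi = iterated_moves pi.
Proof.
move=> Hp.
have Hu : uniq pi by rewrite (perm_uniq Hp) iota_uniq.
have [SQ G] := mainQ pi Hu.
rewrite /iterated_moves descent_topsE SQ fold_eq // => k Hk.
have Gk := G k Hk.
have Pk : perm_eq (F pi (take k (tops pi))) (iota 1 n) by apply: perm_trans (F_perm _ _) Hp.
apply: r_move_mv => //; first by rewrite (perm_uniq Pk) iota_uniq.
case/andP: Gk => H1 _.
have : nth 0 (tops pi) k \in F pi (take k (tops pi)) by rewrite -index_mem (ltnW H1).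
rewrite (perm_mem Pk) mem_iota (perm_size Pk) size_iota; lia.
Qed.
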